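(* Let $a\in\mathbf F^{\uparrow}$ with $\mathrm{supp}(a)=(0,r)$, let $\alpha_0\in(0,r)\cap A$, $\alpha_k=(\alpha_0)a^k$ ($k\in\mathbb Z$), and $b\in\mathbf F^{\uparrow}$ with $\mathrm{supp}(b)=(\alpha_0,\alpha_1)$. Let $d\in\mathbf F_{(\alpha_0,\alpha_1)}$ be such that the centralizer of $b$ in $\mathbf F_{(\alpha_0,\alpha_1)}$ equals $\langle d\rangle$. Then the centralizer of the set $\{a^{-k}ba^k\mid k\in\mathbb Z\}$ in $\mathbf F$ is the subgroup generated by $\{a^{-k}da^k\mid k\in\mathbb Z\}$.
   Context: Maps act on the right. Fix real $r>0$, a subgroup $\Lambda\neq\{1\}$ of $\mathbb R^*_+$, and an additive subgroup $A\subseteq\mathbb R$ with $r\in A$ and $\lambda A\subseteq A$ for $\lambda\in\Lambda$. $\mathbf F=\mathbf F(r,\Lambda,A)$ is the group of homeomorphisms $x\colon[0,r)\to[0,r)$ that are piecewise affine with finitely many breakpoints, all slopes in $\Lambda$, and all breakpoints and their images in $A$. $\mathbf F^{\uparrow}=\{x\in\mathbf F\mid(\gamma)x\ge\gamma\ \forall\gamma\}$; $\mathrm{supp}(x)$ is the set of non-fixed points; for $S\subseteq[0,r)$, $\mathbf F_S=\{x\in\mathbf F\mid\mathrm{supp}(x)\subseteq S\}$. *)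

(* Defs.v *)
From Stdlib Require Import Reals ZArith ClassicalEpsilon.
Open Scope R_scope.

(* Elements of F(r,Lambda,A) are represented as functions R -> R that are the
   identity outside [0,r).  Maps act on the right: (t)(xy) = ((t)x)y, so the
   product xy is the function composition  fun t => y (x t). *)

Definition inI (r t : R) : Prop := 0 <= t < r.

Definition mult_subgroup_pos (Lambda : R -> Prop) : Prop :=
  (forall l, Lambda l -> 0 < l) /\ Lambda 1 /\
  (forall l m, Lambda l -> Lambda m -> Lambda (l * m)) /\
  (forall l, Lambda l -> Lambda (/ l)) /\
  (exists l, Lambda l /\ l <> 1).

Definition add_subgroup (A : R -> Prop) : Prop :=
  A 0 /\ (forall s t, A s -> A t -> A (s + t)) /\ (forall s, A s -> A (- s)).

Definition cont_on_I (r : R) (f : R -> R) : Prop :=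
  forall t, inI r t -> forall eps, 0 < eps -> exists delta, 0 < delta /\
    forall s, inI r s -> Rabs (s - t) < delta -> Rabs (f s - f t) < eps.

Definition homeo_I (r : R) (x : R -> R) : Prop :=
  (forall t, inI r t -> inI r (x t)) /\
  exists y : R -> R,
    (forall t, inI r t -> inI r (y t)) /\
    (forall t, inI r t -> y (x t) = t) /\
    (forall t, inI r t -> x (y t) = t) /\
    cont_on_I r x /\ cont_on_I r y.

Definition pw_affine (r : R) (Lambda A : R -> Prop) (x : R -> R) : Prop :=
  exists (n : nat) (p : nat -> R),
    p 0%nat = 0 /\ p n = r /\
    forall i, (i < n)%nat ->
      p i < p (S i) /\ A (p i) /\ A (x (p i)) /\
      exists l c, Lambda l /\
        forall t, p i <= t < p (S i) -> x t = l * t + c.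

Definition inF (r : R) (Lambda A : R -> Prop) (x : R -> R) : Prop :=
  (forall t, ~ inI r t -> x t = t) /\ homeo_I r x /\ pw_affine r Lambda A x.

Definition inFup (r : R) (Lambda A : R -> Prop) (x : R -> R) : Prop :=
  inF r Lambda A x /\ forall t, inI r t -> t <= x t.

Definition supp (r : R) (x : R -> R) (t : R) : Prop := inI r t /\ x t <> t.

Definition inF_S (r : R) (Lambda A : R -> Prop) (S : R -> Prop) (x : R -> R) : Prop :=
  inF r Lambda A x /\ forall t, supp r x t -> S t.

(* inverse map (chosen by classical choice; it is the true inverse for bijections) *)
Definition inv (x : R -> R) : R -> R :=
  fun t => epsilon (inhabits 0) (fun s => x s = t).

Definition powZ (x : R -> R) (k : Z) : R -> R :=
  match k with
  | Z0 => fun t => t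
  | Zpos p => Nat.iter (Pos.to_nat p) x
  | Zneg p => Nat.iter (Pos.to_nat p) (inv x)
  end.

(* a^{-k} b a^k in right-action notation: t |-> ((t a^{-k}) b) a^k *)
Definition conjZ (a : R -> R) (k : Z) (b : R -> R) : R -> R :=
  fun t => powZ a k (b (powZ a (- k) t)).

Definition commute (x y : R -> R) : Prop := forall t, x (y t) = y (x t).

Definition fext (x y : R -> R) : Prop := forall t, x t = y t.

Inductive Gen (S : (R -> R) -> Prop) : (R -> R) -> Prop :=
  | gen_base : forall x, S x -> Gen S x
  | gen_one : Gen S (fun t => t)
  | gen_ext : forall x y, Gen S y -> fext x y -> Gen S x
  | gen_mul : forall x y, Gen S x -> Gen S y -> Gen S (fun t => y (x t))
  | gen_inv : forall x y, Gen S x -> (forall t, y (x t) = t) ->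
                (forall t, x (y t) = t) -> Gen S y.

(* Main.v *)
Require Import Defs.
From Stdlib Require Import Reals ZArith Lra Lia List Classical ClassicalEpsilon FunctionalExtensionality.
Open Scope R_scope.

Ltac rabs_h := repeat match goal with
 | H : Rabs _ < _ |- _ => apply Rabs_def2 in H; destruct H
 end.

Section Main.
Variables (r : R) (Lambda A : R -> Prop).
Hypothesis hr : 0 < r.
Hypothesis hLambda : mult_subgroup_pos Lambda.
Hypothesis hA : add_subgroup A.
Hypothesis hLA : forall l t, Lambda l -> A t -> A (l * t).

Lemma lam_pos l : Lambda l -> 0 < l.
Proof. destruct hLambda as [H _]; auto. Qed.
Lemma lam_mul l m : Lambda l -> Lambda m -> Lambda (l * m).
Proof. destruct hLambda as [_ [_ [H _]]]; auto. Qed.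
Lemma lam_inv l : Lambda l -> Lambda (/ l).
Proof. destruct hLambda as [_ [_ [_ [H _]]]]; auto. Qed.
Lemma lam_1 : Lambda 1.
Proof. destruct hLambda as [_ [H _]]; auto. Qed.
Lemma A0 : A 0.
Proof. destruct hA as [H _]; auto. Qed.
Lemma Aadd s t : A s -> A t -> A (s + t).
Proof. destruct hA as [_ [H _]]; auto. Qed.
Lemma Aopp s : A s -> A (- s).
Proof. destruct hA as [_ [_ H]]; auto. Qed.

Definition pwI (a0 b0 : R) (x : R -> R) : Prop :=
  exists (n : nat) (p : nat -> R),
    p 0%nat = a0 /\ p n = b0 /\
    forall i, (i < n)%nat ->
      p i < p (S i) /\ A (p i) /\ A (x (p i)) /\
      exists l c, Lambda l /\
        forall t, p i <= t < p (S i) -> x t = l * t + c.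

Lemma pwI_concat a0 m b0 x : pwI a0 m x -> pwI m b0 x -> pwI a0 b0 x.
Proof.
  intros [n1 [p1 [H10 [H1n H1]]]] [n2 [p2 [H20 [H2n H2]]]].
  exists (n1 + n2)%nat, (fun i => if (i <=? n1)%nat then p1 i else p2 (i - n1)%nat).
  split; [|split].
  - simpl. auto.
  - destruct (Nat.leb_spec (n1 + n2) n1).
    + assert (n2 = 0%nat) by lia. subst n2. rewrite Nat.add_0_r. congruence.
    + rewrite <- H2n. f_equal. lia.
  - intros i Hi. destruct (Nat.leb_spec i n1); destruct (Nat.leb_spec (S i) n1).
    + apply H1; lia.
    + assert (i = n1) by lia. subst i.
      replace (S n1 - n1)%nat with 1%nat by lia. rewrite H1n, <- H20.
      apply (H2 0%nat). lia.
    + lia.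
    + replace (S i - n1)%nat with (S (i - n1)) by lia. apply H2. lia.
Qed.

Lemma PW_to_pwI x : forall L a0 b0, a0 < b0 -> A a0 -> A (x a0) ->
  (forall q, In q L -> a0 < q < b0 -> A q /\ A (x q)) ->
  (forall u v, a0 <= u /\ u < v /\ v <= b0 -> (forall q, In q L -> ~ (u < q < v)) ->
     exists l c, Lambda l /\ forall s, u <= s < v -> x s = l * s + c) ->
  pwI a0 b0 x.
Proof.
  induction L as [|q L IH]; intros a0 b0 Hab Ha Hxa HL Haff.
  - destruct (Haff a0 b0) as [l [c [Hl Hc]]]. lra. intros q [].
    exists 1%nat, (fun i => match i with O => a0 | _ => b0 end).
    split; [reflexivity|split; [reflexivity|]].
    intros i Hi. assert (i = 0%nat) by lia. subst i.
    repeat split; auto. exists l, c. auto.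
  - destruct (classic (a0 < q < b0)) as [Hq|Hq].
    + destruct (HL q (or_introl eq_refl) Hq) as [Aq Axq].
      apply pwI_concat with q.
      * apply IH; auto; try lra.
        -- intros q' Hq' Hr. apply HL. right; auto. lra.
        -- intros u v Huv Hno. apply Haff. lra.
           intros q' [E|Hq'] Hc. subst q'. lra. apply (Hno q' Hq'); auto.
      * apply IH; auto; try lra.
        -- intros q' Hq' Hr. apply HL. right; auto. lra.
        -- intros u v Huv Hno. apply Haff. lra.
           intros q' [E|Hq'] Hc. subst q'. lra. apply (Hno q' Hq'); auto.
    + apply IH; auto.
      * intros q' Hq' Hr. apply HL. right; auto. auto.
      * intros u v Huv Hno. apply Haff. auto.
        intros q' [E|Hq'] Hc. subst q'. lra. apply (Hno q' Hq'); auto.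
Qed.

Definition PW (x : R -> R) : Prop :=
  exists L : list R, (forall q, In q L -> A q /\ A (x q)) /\ A (x 0) /\
    forall u v, 0 <= u /\ u < v /\ v <= r -> (forall q, In q L -> ~ (u < q < v)) ->
      exists l c, Lambda l /\ forall s, u <= s < v -> x s = l * s + c.

Lemma PW_to_pw x : PW x -> pw_affine r Lambda A x.
Proof.
  intros [L [HL [H0 Haff]]].
  apply (PW_to_pwI x L 0 r); auto using A0.
Qed.

Lemma piece_find (n : nat) (p : nat -> R) :
  p 0%nat = 0 -> p n = r -> (forall i, (i < n)%nat -> p i < p (S i)) ->
  forall t, 0 <= t < r -> exists i, (i < n)%nat /\ p i <= t < p (S i).
Proof.
  intros H0 Hn Hinc t Ht.
  assert (forall m, (m <= n)%nat -> t < p m -> exists i, (i < m)%nat /\ p i <= t < p (S i)).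
  { induction m; intros Hm Htm. lra.
    destruct (Rle_lt_dec (p m) t).
    - exists m. split; [lia|lra].
    - destruct IHm as [i [Hi1 Hi2]]. lia. auto. exists i. split; [lia|auto]. }
  destruct (H n) as [i [Hi1 Hi2]]; auto. lra. exists i; auto.
Qed.

Lemma p_mono (n : nat) (p : nat -> R) : (forall i, (i < n)%nat -> p i < p (S i)) ->
  forall i j, (i <= j <= n)%nat -> p i <= p j.
Proof.
  intros Hinc i j [Hij Hjn]. induction Hij. lra.
  specialize (Hinc m). assert (p m < p (S m)) by (apply Hinc; lia).
  assert (p i <= p m) by (apply IHHij; lia). lra.
Qed.

Lemma pw_to_PW x : pw_affine r Lambda A x -> PW x.
Proof.
  intros [n [p [H0 [Hn H]]]].
  assert (Hinc : forall i, (i < n)%nat -> p i < p (S i)) by (intros i Hi; apply H; auto).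
  assert (Hnpos : (0 < n)%nat).
  { destruct n. rewrite H0 in Hn. lra. lia. }
  exists (map p (seq 0 n)). split; [|split].
  - intros q Hq. apply in_map_iff in Hq. destruct Hq as [i [E Hi]]. apply in_seq in Hi.
    subst q. destruct (H i) as [_ [? [? _]]]. lia. auto.
  - rewrite <- H0. apply H. auto.
  - intros u v Huv Hno.
    destruct (piece_find n p H0 Hn Hinc u) as [i [Hi Hpi]]. lra.
    assert (v <= p (S i)).
    { destruct (Nat.eq_dec (S i) n) as [E|E].
      - rewrite E, Hn. lra.
      - destruct (Rle_lt_dec v (p (S i))); auto. exfalso.
        apply (Hno (p (S i))). apply in_map. apply in_seq. lia. lra. }
    destruct (H i Hi) as [_ [_ [_ [l [c [Hl Hc]]]]]].
    exists l, c. split; auto. intros s Hs. apply Hc. lra.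
Qed.


Lemma cont_end x u v l c : cont_on_I r x -> 0 <= u -> u < v -> v < r -> 0 < l ->
  (forall s, u <= s < v -> x s = l * s + c) -> x v = l * v + c.
Proof.
  intros Hc Hu Huv Hv Hl Haff.
  destruct (Req_dec (x v) (l * v + c)) as [E|NE]; auto. exfalso.
  set (e := Rabs (x v - (l * v + c))).
  assert (He : 0 < e) by (apply Rabs_pos_lt; lra).
  destruct (Hc v) with (eps := e / 2) as [delta [Hd Hdel]]. split; lra. lra.
  set (h := Rmin (delta / 2) (Rmin ((v - u) / 2) (e / (4 * l)))).
  assert (Hh1 : h <= delta / 2) by apply Rmin_l.
  assert (Hh2 : h <= (v - u) / 2) by (eapply Rle_trans; [apply Rmin_r|apply Rmin_l]).
  assert (Hh3 : h <= e / (4 * l)) by (eapply Rle_trans; [apply Rmin_r|apply Rmin_r]).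
  assert (Hh0 : 0 < h).
  { unfold h. apply Rmin_glb_lt. lra. apply Rmin_glb_lt. lra.
    apply Rdiv_lt_0_compat; lra. }
  assert (Hlh : l * h <= e / 4).
  { apply Rle_trans with (l * (e / (4 * l))). apply Rmult_le_compat_l; lra.
    right. field. lra. }
  assert (Hlh0 : 0 <= l * h) by (apply Rmult_le_pos; lra).
  specialize (Hdel (v - h)). 
  assert (Hs : x (v - h) = l * (v - h) + c) by (apply Haff; lra).
  assert (Habs : Rabs (x (v - h) - x v) < e / 2).
  { apply Hdel. split; lra. apply Rabs_def1; lra. }
  rewrite Hs in Habs. rabs_h.
  destruct (Rcase_abs (x v - (l * v + c))).
  - assert (e = - (x v - (l * v + c))) by (unfold e; apply Rabs_left; auto). lra.
  - assert (e = (x v - (l * v + c))) by (unfold e; apply Rabs_right; auto). lra.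
Qed.

Lemma affine_le_lim u v l c M : u < v -> 0 < l ->
  (forall s, u <= s < v -> l * s + c <= M) -> l * v + c <= M.
Proof.
  intros Huv Hl H. destruct (Rle_lt_dec (l * v + c) M) as [|Hgt]; auto. exfalso.
  set (e := l * v + c - M).
  set (h := Rmin ((v - u) / 2) (e / (2 * l))).
  assert (Hh2 : h <= (v - u) / 2) by apply Rmin_l.
  assert (Hh3 : h <= e / (2 * l)) by apply Rmin_r.
  assert (Hh0 : 0 < h).
  { unfold h. apply Rmin_glb_lt. lra. apply Rdiv_lt_0_compat; unfold e; lra. }
  assert (Hlh : l * h <= e / 2).
  { apply Rle_trans with (l * (e / (2 * l))). apply Rmult_le_compat_l; lra.
    right. field. lra. }
  specialize (H (v - h)). assert (l * (v - h) + c <= M) by (apply H; lra).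
  unfold e in *. nra.
Qed.

Definition G := inF r Lambda A.

Lemma G_out x t : G x -> ~ inI r t -> x t = t.
Proof. intros [H _]; auto. Qed.
Lemma G_in x t : G x -> inI r t -> inI r (x t).
Proof. intros [_ [[H _] _]]; auto. Qed.
Lemma G_cont x : G x -> cont_on_I r x.
Proof. intros [_ [[_ [y [_ [_ [_ [H _]]]]]] _]]; auto. Qed.
Lemma G_pw x : G x -> pw_affine r Lambda A x.
Proof. intros [_ [_ H]]; auto. Qed.

Lemma G_mono_in x : G x -> forall s t, 0 <= s -> s < t -> t < r -> x s < x t.
Proof.
  intros Hx. destruct (G_pw x Hx) as [n [p [H0 [Hn H]]]].
  assert (Hinc : forall i, (i < n)%nat -> p i < p (S i)) by (intros i Hi; apply H; auto).
  assert (R : forall i, (i <= n)%nat -> forall s t, 0 <= s -> s < t -> t <= p i -> t < r -> x s < x t).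
  { induction i; intros Hi s t Hs Hst Hti Htr.
    - rewrite H0 in Hti. lra.
    - destruct (Rle_lt_dec t (p i)) as [Hle|Hlt].
      + apply IHi; auto; lia.
      + destruct (H i) as [_ [_ [_ [l [c [Hl Hc]]]]]]. lia.
        assert (Hl0 : 0 < l) by (apply lam_pos; auto).
        assert (Hpi0 : 0 <= p i) by (rewrite <- H0; apply (p_mono n p Hinc); lia).
        assert (Hxt : x t = l * t + c).
        { destruct (Req_dec t (p (S i))) as [E|NE].
          - rewrite E. apply (cont_end x (p i)); [apply G_cont; auto|lra|apply Hinc; lia|lra|lra|auto].
          - apply Hc; lra. }
        destruct (Rle_lt_dec (p i) s).
        * rewrite Hxt, Hc by lra. nra.
        * assert (x s < x (p i)) by (apply IHi; auto; lia || lra).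
          rewrite (Hc (p i)) in H1 by (split; [lra|apply Hinc; lia]). nra. }
  intros s t Hs Hst Htr. apply (R n); auto. lra.
Qed.

Lemma G_mono x : G x -> forall s t, s < t -> x s < x t.
Proof.
  intros Hx s t Hst.
  destruct (classic (inI r s)) as [Is|Ns]; destruct (classic (inI r t)) as [It|Nt].
  - apply G_mono_in; unfold inI in *; auto; lra.
  - rewrite (G_out x t) by auto. pose proof (G_in x s Hx Is). unfold inI in *. lra.
  - rewrite (G_out x s) by auto. pose proof (G_in x t Hx It). unfold inI in *. lra.
  - rewrite (G_out x t), (G_out x s) by auto. auto.
Qed.

Lemma G_le x : G x -> forall s t, s <= t -> x s <= x t.
Proof. intros Hx s t [H|H]. left; apply G_mono; auto. subst; lra. Qed.

Lemma G_inj x : G x -> forall s t, x s = x t -> s = t.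
Proof.
  intros Hx s t E. destruct (Rtotal_order s t) as [H|[H|H]]; auto;
  apply (G_mono x Hx) in H; lra.
Qed.

Lemma G_lt_iff x : G x -> forall s t, x s < x t <-> s < t.
Proof.
  intros Hx s t; split; intros H; [|apply G_mono; auto].
  destruct (Rlt_le_dec s t); auto. apply (G_le x Hx) in r0. lra.
Qed.

Lemma G_fix0 x : G x -> x 0 = 0.
Proof.
  intros Hx. pose proof Hx as Hx'. destruct Hx' as [Ho [[Hi [z [Hz [Hzx [Hxz _]]]]] Hp]].
  assert (I0 : inI r 0) by (unfold inI; lra).
  pose proof (Hz 0 I0) as Hz0. pose proof (Hi 0 I0) as Hx0. unfold inI in *.
  destruct (Req_dec (z 0) 0) as [E|NE].
  - rewrite <- E at 1. apply Hxz; lra.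
  - assert (x 0 < x (z 0)) by (apply (G_mono x Hx); lra).
    rewrite Hxz in H; lra.
Qed.

Lemma G_A x s : G x -> A s -> A (x s).
Proof.
  intros Hx As. destruct (classic (inI r s)) as [Is|Ns].
  - destruct (G_pw x Hx) as [n [p [H0 [Hn H]]]].
    assert (Hinc : forall i, (i < n)%nat -> p i < p (S i)) by (intros i Hi; apply H; auto).
    destruct (piece_find n p H0 Hn Hinc s Is) as [i [Hi Hs]].
    destruct (H i Hi) as [_ [Api [Axpi [l [c [Hl Hc]]]]]].
    rewrite Hc by auto. rewrite Hc in Axpi by lra.
    replace (l * s + c) with (l * s + ((l * p i + c) + - (l * p i))) by ring.
    apply Aadd. auto. apply Aadd; auto. apply Aopp; auto.
  - rewrite G_out; auto.
Qed.


Lemma cont_id : cont_on_I r (fun t => t).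
Proof. intros t It eps He. exists eps. split; auto. Qed.

Lemma cont_comp f g : cont_on_I r f -> cont_on_I r g -> (forall t, inI r t -> inI r (f t)) ->
  cont_on_I r (fun t => g (f t)).
Proof.
  intros Hf Hg Hin t It eps He.
  destruct (Hg (f t) (Hin t It) eps He) as [d1 [Hd1 H1]].
  destruct (Hf t It d1 Hd1) as [d [Hd H]].
  exists d. split; auto.
Qed.

Lemma G_id : G (fun t => t).
Proof.
  split; [auto|split].
  - split; auto. exists (fun t => t). split; [auto|split; [auto|split; [auto|split; apply cont_id]]].
  - apply PW_to_pw. exists nil. split; [intros q []|split]. apply A0.
    intros u v _ _. exists 1, 0. split. apply lam_1. intros; ring.
Qed.

Lemma G_inv x y : G x -> (forall t, y (x t) = t) -> (forall t, x (y t) = t) -> G y.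
Proof.
  intros Hx Hyx Hxy.
  assert (Hyin : forall t, inI r t -> inI r (y t)).
  { intros t It. destruct (classic (inI r (y t))) as [|N]; auto.
    rewrite <- (Hxy t) in It. rewrite (G_out x (y t) Hx N) in It. contradiction. }
  assert (Hmy : forall s t, s < t -> y s < y t).
  { intros s t Hst. destruct (Rlt_le_dec (y s) (y t)); auto.
    apply (G_le x Hx) in r0. rewrite !Hxy in r0. lra. }
  split; [|split].
  - intros t Nt. rewrite <- (G_out x t Hx Nt) at 1. apply Hyx.
  - split; auto. exists x. split; [intros; apply G_in; auto|]. split; auto. split; auto.
    split.
    + destruct Hx as [_ [[_ [z [Hz [Hzx [Hxz [_ Hcz]]]]]] _]].
      intros t It eps He. destruct (Hcz t It eps He) as [d [Hd H]].
      exists d. split; auto. intros s Is Hs.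
      assert (E : forall w, inI r w -> z w = y w).
      { intros w Iw. rewrite <- (Hxy w) at 1. apply Hzx. auto. }
      rewrite <- !E; auto.
    + apply G_cont; auto.
  - apply PW_to_pw. destruct (pw_to_PW x (G_pw x Hx)) as [L [HL [H0 Haff]]].
    exists (map x L). split; [|split].
    + intros q Hq. apply in_map_iff in Hq. destruct Hq as [q1 [E Hq1]]. subst q.
      rewrite Hyx. destruct (HL q1 Hq1). auto.
    + rewrite <- (G_fix0 x Hx) at 1. rewrite Hyx. apply A0.
    + intros u v Huv Hno.
      assert (Iu : inI r u) by (unfold inI; lra).
      pose proof (Hyin u Iu) as Iyu. unfold inI in Iyu.
      assert (Hv : y v <= r).
      { destruct (Req_dec v r) as [E|NE].
        - subst v. rewrite <- (G_out x r Hx) at 1. rewrite Hyx. lra. unfold inI; lra.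
        - assert (inI r (y v)) by (apply Hyin; unfold inI; lra). unfold inI in *; lra. }
      destruct (Haff (y u) (y v)) as [l [c [Hl Hc]]].
      { split; [lra|split; [apply Hmy; lra|auto]]. }
      { intros q Hq Hin. apply (Hno (x q)). apply in_map; auto.
        rewrite <- (Hxy u), <- (Hxy v). split; apply G_mono; auto; lra. }
      assert (Hl0 : 0 < l) by (apply lam_pos; auto).
      exists (/ l), (- c / l). split. apply lam_inv; auto.
      intros s Hs.
      assert (Hys : x (y s) = l * y s + c).
      { apply Hc. split.
        - destruct Hs as [[Hs|Hs] _]. left; apply Hmy; auto. subst; lra.
        - apply Hmy; lra. }
      rewrite Hxy in Hys. rewrite Hys at 2. field. lra.
Qed.

Lemma G_ginv x : G x -> exists y, G y /\ (forall t, y (x t) = t) /\ (forall t, x (y t) = t).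
Proof.
  intros Hx. pose proof Hx as Hx'.
  destruct Hx' as [Ho [[Hi [z [Hz [Hzx [Hxz _]]]]] _]].
  set (y := fun t => if Rle_dec 0 t then if Rlt_dec t r then z t else t else t).
  assert (Hyx : forall t, y (x t) = t).
  { intros t. destruct (classic (inI r t)) as [It|Nt].
    - pose proof (Hi t It) as Ixt. unfold y, inI in *.
      destruct (Rle_dec 0 (x t)); [|lra]. destruct (Rlt_dec (x t) r); [|lra]. apply Hzx; auto.
    - rewrite (Ho t Nt). unfold y, inI in *.
      destruct (Rle_dec 0 t); auto. destruct (Rlt_dec t r); auto. lra. }
  assert (Hxy : forall t, x (y t) = t).
  { intros t. unfold y. destruct (Rle_dec 0 t); [destruct (Rlt_dec t r)|].
    - apply Hxz. split; auto.
    - apply Ho. unfold inI; lra.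
    - apply Ho. unfold inI; lra. }
  exists y. split; auto. apply (G_inv x); auto.
Qed.

Lemma inv_eq x y : G x -> (forall t, y (x t) = t) -> (forall t, x (y t) = t) -> inv x = y.
Proof.
  intros Hx Hyx Hxy. apply functional_extensionality. intros t. unfold inv.
  assert (E : x (epsilon (inhabits 0) (fun s => x s = t)) = t).
  { apply epsilon_spec. exists (y t). auto. }
  set (e := epsilon (inhabits 0) (fun s => x s = t)) in *. rewrite <- E. rewrite Hyx. reflexivity.
Qed.

Lemma G_comp x y : G x -> G y -> G (fun t => y (x t)).
Proof.
  intros Hx Hy.
  destruct (G_ginv x Hx) as [x' [Hx' [Hx'x Hxx']]].
  destruct (G_ginv y Hy) as [y' [Hy' [Hy'y Hyy']]].
  split; [|split].
  - intros t Nt. rewrite (G_out x t), (G_out y t); auto.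
  - split. intros t It. apply G_in; auto. apply G_in; auto.
    exists (fun t => x' (y' t)). split. intros t It. apply G_in; auto. apply G_in; auto.
    split. intros t _. cbv beta. rewrite Hy'y, Hx'x. auto.
    split. intros t _. cbv beta. rewrite Hxx', Hyy'. auto.
    split; apply cont_comp; try (apply G_cont; auto); intros; apply G_in; auto.
  - apply PW_to_pw.
    destruct (pw_to_PW x (G_pw x Hx)) as [Lx [HLx [H0x Haffx]]].
    destruct (pw_to_PW y (G_pw y Hy)) as [Ly [HLy [H0y Haffy]]].
    exists (Lx ++ map x' Ly). split; [|split].
    + intros q Hq. apply in_app_or in Hq. destruct Hq as [Hq|Hq].
      * destruct (HLx q Hq). split; auto. apply G_A; auto.
      * apply in_map_iff in Hq. destruct Hq as [q1 [E Hq1]]. subst q.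
        rewrite Hxx'. destruct (HLy q1 Hq1). split; auto. apply G_A; auto.
    + rewrite (G_fix0 x Hx), (G_fix0 y Hy). apply A0.
    + intros u v Huv Hno.
      destruct (Haffx u v Huv) as [l [c [Hl Hc]]].
      { intros q Hq. apply Hno. apply in_or_app. auto. }
      assert (Hl0 : 0 < l) by (apply lam_pos; auto).
      assert (Iu : inI r u) by (unfold inI; lra).
      pose proof (G_in x u Hx Iu) as Ixu. unfold inI in Ixu. rewrite Hc in Ixu by lra.
      assert (Hv : l * v + c <= r).
      { apply (affine_le_lim u); try lra. intros s Hs. rewrite <- Hc by auto.
        assert (inI r (x s)) by (apply G_in; auto; unfold inI; lra). unfold inI in *; lra. }
      destruct (Haffy (l * u + c) (l * v + c)) as [l' [c' [Hl' Hc']]].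
      { split. lra. split; [nra|auto]. }
      { intros q Hq Hin. set (s := (q - c) / l).
        assert (Es : l * s + c = q) by (unfold s; field; lra).
        assert (Hs : u < s < v) by (split; nra).
        apply (Hno s). apply in_or_app. right.
        rewrite <- (Hx'x s). apply in_map. rewrite Hc by lra. rewrite Es. auto. auto. }
      exists (l' * l), (l' * c + c'). split. apply lam_mul; auto.
      intros s Hs. rewrite Hc by auto. rewrite Hc'. ring. split; nra.
Qed.


Section Pow.
Variable a : R -> R.
Hypothesis Ga : G a.

Lemma ai_props : G (inv a) /\ (forall t, inv a (a t) = t) /\ (forall t, a (inv a t) = t).
Proof.
  destruct (G_ginv a Ga) as [y [Gy [H1 H2]]].
  rewrite (inv_eq a y); auto.
Qed.

Lemma powZ_nat n : powZ a (Z.of_nat n) = Nat.iter n a.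
Proof.
  destruct n. reflexivity. simpl. rewrite SuccNat2Pos.id_succ. reflexivity.
Qed.

Lemma powZ_negnat n : powZ a (- Z.of_nat n) = Nat.iter n (inv a).
Proof.
  destruct n. reflexivity. simpl. rewrite SuccNat2Pos.id_succ. reflexivity.
Qed.

Lemma pow_succ k t : powZ a (Z.succ k) t = a (powZ a k t).
Proof.
  destruct (Z_le_gt_dec 0 k) as [H|H].
  - replace k with (Z.of_nat (Z.to_nat k)) by lia.
    replace (Z.succ (Z.of_nat (Z.to_nat k))) with (Z.of_nat (S (Z.to_nat k))) by lia.
    rewrite !powZ_nat. reflexivity.
  - destruct (Z.to_nat (- k)) as [|m] eqn:E. lia.
    replace k with (- Z.of_nat (S m))%Z by lia.
    replace (Z.succ (- Z.of_nat (S m))) with (- Z.of_nat m)%Z by lia.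
    rewrite !powZ_negnat. simpl. destruct ai_props as [_ [_ H2]]. rewrite H2. reflexivity.
Qed.

Lemma pow_pred k t : powZ a (Z.pred k) t = inv a (powZ a k t).
Proof.
  rewrite <- (Z.succ_pred k) at 2. rewrite pow_succ.
  destruct ai_props as [_ [H1 _]]. rewrite H1. reflexivity.
Qed.

Lemma pow_add j k t : powZ a (j + k) t = powZ a k (powZ a j t).
Proof.
  revert t. induction k using Z.peano_ind; intros t.
  - rewrite Z.add_0_r. reflexivity.
  - rewrite Z.add_succ_r, !pow_succ, IHk. reflexivity.
  - rewrite Z.add_pred_r, !pow_pred, IHk. reflexivity.
Qed.

Lemma pow_inv1 k t : powZ a (- k) (powZ a k t) = t.
Proof. rewrite <- pow_add. replace (k + - k)%Z with 0%Z by lia. reflexivity. Qed.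

Lemma pow_inv2 k t : powZ a k (powZ a (- k) t) = t.
Proof. rewrite <- pow_add. replace (- k + k)%Z with 0%Z by lia. reflexivity. Qed.

Lemma G_pow k : G (powZ a k).
Proof.
  induction k using Z.peano_ind.
  - exact G_id.
  - replace (powZ a (Z.succ k)) with (fun t => a (powZ a k t)).
    apply G_comp; auto. apply functional_extensionality; intros; rewrite pow_succ; auto.
  - replace (powZ a (Z.pred k)) with (fun t => inv a (powZ a k t)).
    apply G_comp; auto. apply ai_props.
    apply functional_extensionality; intros; rewrite pow_pred; auto.
Qed.

Lemma conj_conj j k f : conjZ a k (conjZ a j f) = conjZ a (j + k) f.
Proof.
  apply functional_extensionality; intros t. unfold conjZ.
  rewrite pow_add. rewrite <- (pow_add (- k) (- j)).
  replace (- k + - j)%Z with (- (j + k))%Z by lia. reflexivity.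
Qed.

Lemma conj_0 f : conjZ a 0 f = f.
Proof. reflexivity. Qed.

Lemma conj_back k f : conjZ a k (conjZ a (- k) f) = f.
Proof. rewrite conj_conj. replace (- k + k)%Z with 0%Z by lia. reflexivity. Qed.

Lemma conj_back2 k f : conjZ a (- k) (conjZ a k f) = f.
Proof. rewrite conj_conj. replace (k + - k)%Z with 0%Z by lia. reflexivity. Qed.

Lemma commute_conj k f g : commute f g -> commute (conjZ a k f) (conjZ a k g).
Proof.
  intros H t. unfold conjZ. rewrite !pow_inv1. rewrite H. reflexivity.
Qed.

Lemma G_conj k f : G f -> G (conjZ a k f).
Proof.
  intros Hf. unfold conjZ.
  apply (G_comp (fun t => f (powZ a (- k) t)) (powZ a k)); [apply G_comp|]; auto; apply G_pow.
Qed.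

Lemma Gen_conj k (S T : (R -> R) -> Prop) :
  (forall f, S f -> T (conjZ a k f)) -> forall f, Gen S f -> Gen T (conjZ a k f).
Proof.
  intros HST f Hf. induction Hf.
  - apply gen_base; auto.
  - replace (conjZ a k (fun t => t)) with (fun t : R => t). apply gen_one.
    apply functional_extensionality; intros t. unfold conjZ. rewrite pow_inv2. auto.
  - replace x with y. auto. apply functional_extensionality; intros t; symmetry; auto.
  - replace (conjZ a k (fun t => y (x t))) with (fun t => conjZ a k y (conjZ a k x t)).
    apply gen_mul; auto.
    apply functional_extensionality; intros t. unfold conjZ. rewrite pow_inv1. auto.
  - apply (gen_inv T (conjZ a k x)); auto.
    + intros t. unfold conjZ. rewrite pow_inv1, H, pow_inv2. auto.
    + intros t. unfold conjZ. rewrite pow_inv1, H0, pow_inv2. auto.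
Qed.

End Pow.


Definition restr (p q : R) (x : R -> R) (t : R) : R :=
  if Rlt_dec p t then if Rlt_dec t q then x t else t else t.

Lemma restr_in p q x t : p < t < q -> restr p q x t = x t.
Proof.
  intros H. unfold restr. destruct (Rlt_dec p t); [|lra]. destruct (Rlt_dec t q); [auto|lra].
Qed.

Lemma restr_out p q x t : ~ (p < t < q) -> restr p q x t = t.
Proof.
  intros H. unfold restr. destruct (Rlt_dec p t); auto. destruct (Rlt_dec t q); auto.
  exfalso; apply H; auto.
Qed.

Lemma cont_restr p q x : cont_on_I r x -> x p = p -> x q = q -> p < q ->
  cont_on_I r (restr p q x).
Proof.
  intros Hc Hp Hq Hpq t It eps He.
  destruct (Hc t It eps He) as [d [Hd H]].
  destruct (classic (p < t < q)) as [Hin|Hout].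
  - exists (Rmin d (Rmin (t - p) (q - t))).
    split. apply Rmin_glb_lt; auto. apply Rmin_glb_lt; lra.
    intros s Is Hs. pose proof (Rmin_l d (Rmin (t - p) (q - t))).
    pose proof (Rmin_r d (Rmin (t - p) (q - t))). pose proof (Rmin_l (t - p) (q - t)).
    pose proof (Rmin_r (t - p) (q - t)).
    assert (p < s < q) by (rabs_h; split; lra).
    rewrite !restr_in by auto. apply H; auto. apply Rabs_def1; rabs_h; lra.
  - rewrite (restr_out p q x t Hout).
    destruct (classic (x t = t)) as [Fix|NFix].
    + exists (Rmin d eps). split. apply Rmin_glb_lt; auto.
      intros s Is Hs. pose proof (Rmin_l d eps). pose proof (Rmin_r d eps).
      destruct (classic (p < s < q)).
      * rewrite restr_in by auto. rewrite <- Fix. apply H; auto.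
        apply Rabs_def1; rabs_h; lra.
      * rewrite restr_out by auto. apply Rabs_def1; rabs_h; lra.
    + assert (Hne : t < p \/ q < t).
      { destruct (Rtotal_order t p) as [|[E|]]; [auto|subst; tauto|].
        destruct (Rtotal_order t q) as [|[E|]]; [tauto|subst; tauto|auto]. }
      destruct Hne as [Hlt|Hgt].
      * exists (Rmin eps (p - t)). split. apply Rmin_glb_lt; lra.
        intros s Is Hs. pose proof (Rmin_l eps (p - t)). pose proof (Rmin_r eps (p - t)).
        rabs_h. rewrite restr_out by lra. apply Rabs_def1; lra.
      * exists (Rmin eps (t - q)). split. apply Rmin_glb_lt; lra.
        intros s Is Hs. pose proof (Rmin_l eps (t - q)). pose proof (Rmin_r eps (t - q)).
        rabs_h. rewrite restr_out by lra. apply Rabs_def1; lra.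
Qed.

Lemma G_restr x p q : G x -> 0 < p -> p < q -> q < r -> x p = p -> x q = q -> A p -> A q ->
  G (restr p q x).
Proof.
  intros Hx Hp Hpq Hq Hxp Hxq Ap Aq.
  destruct (G_ginv x Hx) as [y [Hy [Hyx Hxy]]].
  assert (Hyp : y p = p) by (rewrite <- Hxp at 1; auto).
  assert (Hyq : y q = q) by (rewrite <- Hxq at 1; auto).
  assert (Px : forall t, p < t < q -> p < x t < q).
  { intros t Ht. rewrite <- Hxp, <- Hxq. split; apply G_mono; auto; lra. }
  assert (Py : forall t, p < t < q -> p < y t < q).
  { intros t Ht. rewrite <- Hyp, <- Hyq. split; apply G_mono; auto; lra. }
  split; [|split].
  - intros t Nt. apply restr_out. unfold inI in Nt. lra.
  - split.
    + intros t It. destruct (classic (p < t < q)).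
      rewrite restr_in by auto. apply G_in; auto. rewrite restr_out; auto.
    + exists (restr p q y). split; [|split; [|split; [|split]]].
      * intros t It. destruct (classic (p < t < q)).
        rewrite restr_in by auto. apply G_in; auto. rewrite restr_out; auto.
      * intros t _. destruct (classic (p < t < q)).
        -- rewrite (restr_in p q x t H), (restr_in p q y (x t) (Px t H)). auto.
        -- rewrite (restr_out p q x t H), (restr_out p q y t H). auto.
      * intros t _. destruct (classic (p < t < q)).
        -- rewrite (restr_in p q y t H), (restr_in p q x (y t) (Py t H)). auto.
        -- rewrite (restr_out p q y t H), (restr_out p q x t H). auto.
      * apply cont_restr; auto. apply G_cont; auto.
      * apply cont_restr; auto. apply G_cont; auto.
  - apply PW_to_pw. destruct (pw_to_PW x (G_pw x Hx)) as [L [HL [H0 Haff]]].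
    exists (p :: q :: L). split; [|split].
    + intros q' [E|[E|Hq']].
      * subst q'. rewrite restr_out by lra. auto.
      * subst q'. rewrite restr_out by lra. auto.
      * destruct (HL q' Hq'). split; auto. destruct (classic (p < q' < q)).
        rewrite restr_in; auto. rewrite restr_out; auto.
    + rewrite restr_out by lra. apply A0.
    + intros u v Huv Hno.
      assert (Hnp : ~ (u < p < v)) by (apply Hno; left; auto).
      assert (Hnq : ~ (u < q < v)) by (apply Hno; right; left; auto).
      destruct (Rlt_le_dec u p) as [Hup|Hpu].
      * exists 1, 0. split. apply lam_1. intros s Hs. rewrite restr_out by lra. ring.
      * destruct (Rlt_le_dec u q) as [Huq|Hqu].
        -- destruct (Haff u v Huv) as [l [c [Hl Hc]]].
           { intros q' Hq'. apply Hno. right; right; auto. }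
           exists l, c. split; auto. intros s Hs.
           destruct (Req_dec s p) as [E|NE].
           ++ subst s. rewrite restr_out by lra. rewrite <- Hc by auto. auto.
           ++ rewrite restr_in by lra. auto.
        -- exists 1, 0. split. apply lam_1. intros s Hs. rewrite restr_out by lra. ring.
Qed.

Lemma G_pos g t : G g -> 0 < t < r -> 0 < g t < r.
Proof.
  intros Hg Ht. split.
  - rewrite <- (G_fix0 g Hg). apply G_mono; auto; lra.
  - assert (inI r (g t)) by (apply G_in; auto; unfold inI; lra). unfold inI in *; lra.
Qed.

Section Alpha.
Variables (a : R -> R) (alpha0 : R).
Hypothesis Ga : G a.
Hypothesis halpha0 : 0 < alpha0 < r.
Hypothesis hagt : forall t, 0 < t < r -> t < a t.

Definition alpha k := powZ a k alpha0.
Definition Sk k t := alpha k < t < alpha (k + 1).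

Lemma alpha_in k : 0 < alpha k < r.
Proof. apply G_pos; auto. apply G_pow; auto. Qed.

Lemma alpha_succ k : alpha (k + 1) = a (alpha k).
Proof. unfold alpha. apply (pow_succ a Ga k). Qed.

Lemma alpha_lt_succ k : alpha k < alpha (k + 1).
Proof. rewrite alpha_succ. apply hagt. apply alpha_in. Qed.

Lemma alpha_mono j k : (j < k)%Z -> alpha j < alpha k.
Proof.
  intros H. replace k with (j + 1 + Z.of_nat (Z.to_nat (k - j - 1)))%Z by lia.
  generalize (Z.to_nat (k - j - 1)). intros n. induction n.
  - replace (j + 1 + Z.of_nat 0)%Z with (j + 1)%Z by lia. apply alpha_lt_succ.
  - replace (j + 1 + Z.of_nat (S n))%Z with (j + 1 + Z.of_nat n + 1)%Z by lia.
    pose proof (alpha_lt_succ (j + 1 + Z.of_nat n)). lra.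
Qed.

Lemma alpha_le j k : (j <= k)%Z -> alpha j <= alpha k.
Proof.
  intros H. destruct (Z.eq_dec j k). subst; lra. left; apply alpha_mono; lia.
Qed.

Lemma S_disj j k t : j <> k -> Sk j t -> Sk k t -> False.
Proof.
  unfold Sk. intros H Hj Hk. destruct (Z_lt_ge_dec j k).
  - pose proof (alpha_le (j + 1) k). assert (j + 1 <= k)%Z by lia. intuition lra.
  - pose proof (alpha_le (k + 1) j). assert (k + 1 <= j)%Z by lia. intuition lra.
Qed.

Lemma interval_uniq j k q : alpha j <= q < alpha (j + 1) -> alpha k <= q < alpha (k + 1) -> j = k.
Proof.
  intros Hj Hk. destruct (Z.lt_trichotomy j k) as [H|[H|H]]; auto.
  - pose proof (alpha_le (j + 1) k). assert (j + 1 <= k)%Z by lia. intuition lra.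
  - pose proof (alpha_le (k + 1) j). assert (k + 1 <= j)%Z by lia. intuition lra.
Qed.

Lemma pow_alpha j k : powZ a k (alpha j) = alpha (j + k).
Proof. unfold alpha. rewrite pow_add; auto. Qed.

Lemma conj_supp j k f : (forall s, f s <> s -> Sk j s) ->
  forall t, conjZ a k f t <> t -> Sk (j + k) t.
Proof.
  intros Hf t Ht. set (s := powZ a (- k) t).
  assert (Hts : t = powZ a k s) by (unfold s; rewrite pow_inv2; auto).
  assert (Hfs : f s <> s).
  { intros E. apply Ht. unfold conjZ. fold s. rewrite E. auto. }
  destruct (Hf s Hfs) as [H1 H2]. unfold Sk. rewrite Hts.
  rewrite <- pow_alpha. replace (j + k + 1)%Z with (j + 1 + k)%Z by lia.
  rewrite <- pow_alpha. split; apply G_mono; auto; apply G_pow; auto.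
Qed.

Lemma A_alpha k : A alpha0 -> A (alpha k).
Proof. intros H. apply G_A; auto. apply G_pow; auto. Qed.

Lemma cv_lb u L c : Un_cv u L -> (forall n, c <= u n) -> c <= L.
Proof.
  intros Hu Hc. destruct (Rle_lt_dec c L); auto. exfalso.
  destruct (Hu (c - L)) as [N HN]. lra.
  specialize (HN N (le_n N)). unfold R_dist in HN. rabs_h. specialize (Hc N). lra.
Qed.

Lemma cv_ub u L c : Un_cv u L -> (forall n, u n <= c) -> L <= c.
Proof.
  intros Hu Hc. destruct (Rle_lt_dec L c); auto. exfalso.
  destruct (Hu (L - c)) as [N HN]. lra.
  specialize (HN N (le_n N)). unfold R_dist in HN. rabs_h. specialize (Hc N). lra.
Qed.

Lemma cv_cont u L : Un_cv u L -> inI r L -> (forall n, inI r (u n)) ->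
  Un_cv (fun n => a (u n)) (a L).
Proof.
  intros Hu IL Hin eps He.
  destruct (G_cont a Ga L IL eps He) as [d [Hd H]].
  destruct (Hu d Hd) as [N HN]. exists N. intros n Hn. unfold R_dist.
  apply H; auto. apply HN; auto.
Qed.

Lemma cv_shift u L : Un_cv u L -> Un_cv (fun n => u (S n)) L.
Proof.
  intros Hu eps He. destruct (Hu eps He) as [N HN]. exists N. intros n Hn. apply HN. lia.
Qed.

Lemma exists_below t : 0 < t < r -> exists k, alpha k <= t.
Proof.
  intros Ht. apply NNPP. intros Hn.
  assert (H : forall k, t < alpha k).
  { intros k. destruct (Rlt_le_dec t (alpha k)); auto. exfalso; apply Hn; eauto. }
  set (u := fun n : nat => alpha (- Z.of_nat n)).
  assert (Hdec : Un_decreasing u).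
  { intros n. unfold u. apply alpha_le. lia. }
  assert (Hlb : has_lb u).
  { exists (- t). intros x [i E]. subst x. unfold opp_seq, u. specialize (H (- Z.of_nat i)%Z). lra. }
  destruct (decreasing_cv u Hdec Hlb) as [L HL].
  assert (HL1 : t <= L) by (apply (cv_lb u); auto; intros n; left; apply H).
  assert (HL2 : L <= alpha0) by (apply (cv_ub u); auto; intros n; apply (alpha_le _ 0); lia).
  assert (Hin : forall n, inI r (u n)) by (intros n; pose proof (alpha_in (- Z.of_nat n)); unfold inI, u in *; lra).
  pose proof (cv_cont _ _ (cv_shift u L HL)) as Hc.
  assert (E : (fun n => a (u (S n))) = u).
  { apply functional_extensionality; intros n. unfold u. rewrite <- alpha_succ. f_equal. lia. }
  cbv beta in Hc. rewrite E in Hc. assert (L = a L).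
  { apply (UL_sequence u); auto. apply Hc. unfold inI; lra. intros n; apply Hin. }
  pose proof (hagt L). lra.
Qed.

Lemma exists_above t : 0 < t < r -> exists k, t < alpha k.
Proof.
  intros Ht. apply NNPP. intros Hn.
  assert (H : forall k, alpha k <= t).
  { intros k. destruct (Rlt_le_dec t (alpha k)); auto. exfalso; apply Hn; eauto. }
  set (u := fun n : nat => alpha (Z.of_nat n)).
  assert (Hg : Un_growing u).
  { intros n. unfold u. apply alpha_le. lia. }
  assert (Hub : has_ub u).
  { exists t. intros x [i E]. subst x. apply H. }
  destruct (growing_cv u Hg Hub) as [L HL].
  assert (HL1 : L <= t) by (apply (cv_ub u); auto; intros n; unfold u; apply H).
  assert (HL2 : alpha0 <= L) by (apply (cv_lb u); auto; intros n; apply (alpha_le 0); lia).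
  assert (Hin : forall n, inI r (u n)) by (intros n; pose proof (alpha_in (Z.of_nat n)); unfold inI, u in *; lra).
  pose proof (cv_cont _ _ HL) as Hc.
  assert (E : (fun n => a (u n)) = (fun n => u (S n))).
  { apply functional_extensionality; intros n. unfold u. rewrite <- alpha_succ. f_equal. lia. }
  rewrite E in Hc. assert (L = a L).
  { apply (UL_sequence (fun n => u (S n))). apply cv_shift; auto. apply Hc. unfold inI; lra. auto. }
  pose proof (hagt L). lra.
Qed.

Lemma covering t : 0 < t < r -> exists k, alpha k <= t < alpha (k + 1).
Proof.
  intros Ht. destruct (exists_below t Ht) as [k1 H1]. destruct (exists_above t Ht) as [k2 H2].
  assert (Hk : (k1 < k2)%Z).
  { destruct (Z_lt_ge_dec k1 k2); auto. pose proof (alpha_le k2 k1 ltac:(lia)). lra. }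
  assert (Aux : forall n k, alpha k <= t -> t < alpha (k + Z.of_nat n) ->
            exists k, alpha k <= t < alpha (k + 1)).
  { induction n; intros k Hk1 Hk2.
    - replace (k + Z.of_nat 0)%Z with k in Hk2 by lia. lra.
    - destruct (Rlt_le_dec t (alpha (k + 1))). exists k; split; auto.
      apply (IHn (k + 1)%Z); auto.
      replace (k + 1 + Z.of_nat n)%Z with (k + Z.of_nat (S n))%Z by lia. auto. }
  apply (Aux (Z.to_nat (k2 - k1)) k1); auto.
  replace (k1 + Z.of_nat (Z.to_nat (k2 - k1)))%Z with k2 by lia. auto.
Qed.


Lemma preserve f (U : R -> Prop) : (forall s t, f s = f t -> s = t) ->
  (forall t, f t <> t -> U t) -> forall t, U t -> U (f t).
Proof.
  intros Hi Hs t Ut. destruct (classic (U (f t))) as [|N]; auto.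
  assert (f (f t) = f t) by (apply NNPP; intros C; apply N; apply Hs; auto).
  apply Hi in H. rewrite H; auto.
Qed.

Lemma commute_disjoint f g (U V : R -> Prop) :
  (forall s t, f s = f t -> s = t) -> (forall s t, g s = g t -> s = t) ->
  (forall t, f t <> t -> U t) -> (forall t, g t <> t -> V t) ->
  (forall t, U t -> V t -> False) -> commute f g.
Proof.
  intros Hf Hg HU HV Hd t.
  assert (Ff : forall t, ~ U t -> f t = t) by (intros s N; apply NNPP; intros C; auto).
  assert (Fg : forall t, ~ V t -> g t = t) by (intros s N; apply NNPP; intros C; auto).
  destruct (classic (U t)) as [Ut|Nt].
  - pose proof (preserve f U Hf HU t Ut) as Uf.
    rewrite (Fg t), (Fg (f t)); auto; intros V'; eapply Hd; eauto.
  - rewrite (Ff t Nt). destruct (classic (V t)) as [Vt|NVt].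
    + pose proof (preserve g V Hg HV t Vt) as Vg. apply Ff. intros U'; eapply Hd; eauto.
    + rewrite (Fg t NVt). apply Ff; auto.
Qed.

Section Product.
Variable x : R -> R.
Definition rk k := restr (alpha k) (alpha (k + 1)) x.
Definition prodL (Ks : list Z) : R -> R :=
  fold_right (fun k f => fun t => f (rk k t)) (fun t => t) Ks.

Lemma prod_out Ks t : (forall k, In k Ks -> ~ Sk k t) -> prodL Ks t = t.
Proof.
  induction Ks as [|k Ks IH]; intros H; simpl; auto.
  unfold rk. rewrite restr_out. apply IH. intros k' Hk'. apply H. right; auto.
  apply H. left; auto.
Qed.

Lemma prod_in Ks k t : (forall k t, Sk k t -> Sk k (x t)) -> NoDup Ks -> In k Ks -> Sk k t -> prodL Ks t = x t.
Proof.
  intros Hp. induction Ks as [|k0 Ks IH]; intros Hnd Hin Ht; simpl. destruct Hin.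
  inversion Hnd; subst. destruct Hin as [E|Hin].
  - subst k0. unfold rk. rewrite restr_in by apply Ht. apply prod_out.
    intros k' Hk' Hs. apply (S_disj k k' (x t)); auto. intros E; subst; contradiction.
  - unfold rk. rewrite restr_out. apply IH; auto.
    intros Hs. apply (S_disj k0 k t); auto. intros E; subst; contradiction.
Qed.

End Product.

Lemma Gen_prod x (T : (R -> R) -> Prop) Ks : (forall k, In k Ks -> Gen T (rk x k)) -> Gen T (prodL x Ks).
Proof.
  induction Ks as [|k Ks IH]; intros H; simpl. apply gen_one.
  apply (gen_mul T (rk x k) (prodL x Ks)). apply H; left; auto. apply IH. intros; apply H; right; auto.
Qed.


Lemma main_lemma (b d : R -> R)
  (hb : G b) (hsb : forall t, b t <> t <-> Sk 0 t)
  (hd : G d) (hsd : forall t, d t <> t -> Sk 0 t)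
  (hcent : forall x, (G x /\ (forall t, x t <> t -> Sk 0 t) /\ commute x b)
                     <-> Gen (fun y => fext y d) x)
  (hA0 : A alpha0) :
  forall x, (G x /\ forall k, commute x (conjZ a k b))
    <-> Gen (fun y => exists k : Z, fext y (conjZ a k d)) x.
Proof.
  set (T := fun y => exists k : Z, fext y (conjZ a k d)).
  assert (Gbk : forall k, G (conjZ a k b)) by (intros; apply G_conj; auto).
  assert (bsupp : forall k t, conjZ a k b t <> t <-> Sk k t).
  { intros k t. split.
    - intros H. rewrite <- (Z.add_0_l k). apply (conj_supp 0 k b); auto.
      intros s Hs; apply hsb; auto.
    - intros H E. set (s := powZ a (- k) t).
      assert (Hs : Sk 0 s).
      { unfold Sk in *. unfold s.
        replace (alpha 0) with (powZ a (- k) (alpha k)) by (rewrite pow_alpha; f_equal; lia).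
        replace (alpha (0 + 1)) with (powZ a (- k) (alpha (k + 1))) by (rewrite pow_alpha; f_equal; lia).
        split; apply G_mono; try apply G_pow; auto; lra. }
      apply hsb in Hs. apply Hs. unfold conjZ in E. fold s in E.
      apply (G_inj (powZ a k)). apply G_pow; auto. rewrite E. unfold s. rewrite pow_inv2; auto. }
  assert (dsupp : forall k t, conjZ a k d t <> t -> Sk k t).
  { intros k t H. rewrite <- (Z.add_0_l k). apply (conj_supp 0 k d); auto. }
  assert (cdb : commute d b) by (apply hcent; apply gen_base; intros t; auto).
  intros x. split.
  -
    intros [Gx Hc].
    destruct (G_ginv x Gx) as [y [Gy [Hyx Hxy]]].
    assert (Hcy : forall k, commute y (conjZ a k b)).
    { intros k t. apply (G_inj x Gx). rewrite Hxy, (Hc k), Hxy. auto. }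
    assert (pres : forall f, G f -> (forall k, commute f (conjZ a k b)) ->
              forall k t, Sk k t -> Sk k (f t)).
    { intros f Gf Hcf k t Ht. apply NNPP. intros N.
      assert (E : conjZ a k b (f t) = f t) by (apply NNPP; intros C; apply N; apply bsupp; auto).
      apply (bsupp k t); auto. apply (G_inj f Gf). rewrite Hcf. auto. }
    assert (fixa : forall k, x (alpha k) = alpha k).
    { intros k. destruct (Rtotal_order (x (alpha k)) (alpha k)) as [Hlt|[E|Hgt]]; auto; exfalso.
      - pose proof (alpha_lt_succ (k - 1)) as H1. replace (k - 1 + 1)%Z with k in H1 by lia.
        set (t := (Rmax (x (alpha k)) (alpha (k - 1)) + alpha k) / 2).
        pose proof (Rmax_l (x (alpha k)) (alpha (k - 1))). pose proof (Rmax_r (x (alpha k)) (alpha (k - 1))).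
        assert (St : Sk (k - 1) t).
        { unfold Sk. replace (k - 1 + 1)%Z with k by lia. unfold t.
          destruct (Rmax_Rle (x (alpha k)) (alpha (k - 1)) (alpha k)) as [_ Hm].
          assert (Rmax (x (alpha k)) (alpha (k - 1)) < alpha k).
          { unfold Rmax. destruct (Rle_dec (x (alpha k)) (alpha (k - 1))); lra. }
          split; lra. }
        pose proof (pres y Gy Hcy _ _ St) as Syt. unfold Sk in Syt.
        replace (k - 1 + 1)%Z with k in Syt by lia.
        assert (x (y t) < x (alpha k)) by (apply G_mono; auto; lra).
        rewrite Hxy in H2. unfold t in H2.
        assert (Rmax (x (alpha k)) (alpha (k - 1)) < alpha k).
        { unfold Rmax. destruct (Rle_dec (x (alpha k)) (alpha (k - 1))); lra. }
        lra.
      - pose proof (alpha_lt_succ k) as H1.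
        set (t := (alpha k + Rmin (x (alpha k)) (alpha (k + 1))) / 2).
        pose proof (Rmin_l (x (alpha k)) (alpha (k + 1))). pose proof (Rmin_r (x (alpha k)) (alpha (k + 1))).
        assert (Rmin (x (alpha k)) (alpha (k + 1)) > alpha k).
        { unfold Rmin. destruct (Rle_dec (x (alpha k)) (alpha (k + 1))); lra. }
        assert (St : Sk k t) by (unfold Sk, t; split; lra).
        pose proof (pres y Gy Hcy _ _ St) as Syt. unfold Sk in Syt.
        assert (x (alpha k) < x (y t)) by (apply G_mono; auto; lra).
        rewrite Hxy in H3. unfold t in H3. lra. }
    assert (Grk : forall k, G (rk x k)).
    { intros k. pose proof (alpha_lt_succ k). pose proof (alpha_in k). pose proof (alpha_in (k + 1)).
      apply G_restr; auto; try lra; apply A_alpha; auto. }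
    assert (Genrk : forall k, Gen T (rk x k)).
    { intros k.
      set (z := conjZ a (- k) (rk x k)).
      assert (Hz : Gen (fun y => fext y d) z).
      { apply hcent. split; [|split].
        - apply G_conj; auto.
        - intros t Ht. replace 0%Z with (k + - k)%Z by lia. apply (conj_supp k (- k) (rk x k)); auto.
          intros s Hs. apply NNPP. intros N. apply Hs. unfold rk. apply restr_out. auto.
        - rewrite <- (conj_back2 a Ga k b). apply (commute_conj a Ga).
          intros t. destruct (classic (Sk k t)) as [St|NSt].
          + pose proof (pres (conjZ a k b) (Gbk k)) as Pb.
            assert (Sb : Sk k (conjZ a k b t)).
            { apply Pb; auto. intros j s. destruct (Z.eq_dec j k). subst; auto.
              apply (commute_disjoint _ _ (Sk k) (Sk j)).
              apply G_inj; auto. apply G_inj; auto.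
              intros s' Hs'; apply bsupp; auto. intros s' Hs'; apply bsupp; auto.
              intros s' H1 H2. apply (S_disj k j s'); auto. }
            unfold rk. rewrite (restr_in _ _ _ _ Sb), (restr_in _ _ _ _ St). apply Hc.
          + assert (E : conjZ a k b t = t) by (apply NNPP; intros C; apply NSt; apply bsupp; auto).
            unfold rk. rewrite E, (restr_out _ _ _ _ NSt). auto. }
      rewrite <- (conj_back a Ga k (rk x k)). fold z.
      apply (Gen_conj a Ga k (fun y => fext y d)); auto.
      intros f Hf. exists k.
      replace f with d by (apply functional_extensionality; intros t; symmetry; auto).
      intros t; auto. }
    destruct (pw_to_PW x (G_pw x Gx)) as [L [HL [H0 Haff]]].
    assert (HKs : exists Ks, forall q, In q L -> 0 < q < r -> exists k, In k Ks /\ alpha k <= q < alpha (k + 1)).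
    { clear HL Haff. induction L as [|q L IH].
      - exists nil. intros q [].
      - destruct IH as [Ks HKs]. destruct (classic (0 < q < r)) as [Hq|Hq].
        + destruct (covering q Hq) as [k Hk]. exists (k :: Ks). intros q' [E|Hq'] Hr.
          * subst q'. exists k. split; auto. left; auto.
          * destruct (HKs q' Hq' Hr) as [k' [Hk' Hk'2]]. exists k'. split; auto. right; auto.
        + exists Ks. intros q' [E|Hq'] Hr. subst; contradiction. auto. }
    destruct HKs as [Ks HKs].
    assert (idout : forall k, ~ In k Ks -> forall t, Sk k t -> x t = t).
    { intros k Nk t St.
      pose proof (alpha_lt_succ k). pose proof (alpha_in k). pose proof (alpha_in (k + 1)).
      destruct (Haff (alpha k) (alpha (k + 1))) as [l [c [Hl Hcx]]].
      { split; [lra|split; lra]. }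
      { intros q Hq Hin. destruct (HKs q Hq) as [k' [Hk' Hk'2]]. lra.
        assert (k' = k) by (apply (interval_uniq k' k q); auto; lra). subst k'. contradiction. }
      assert (Hl0 : 0 < l) by (apply lam_pos; auto).
      assert (E1 : x (alpha k) = l * alpha k + c) by (apply Hcx; lra).
      assert (E2 : x (alpha (k + 1)) = l * alpha (k + 1) + c).
      { apply (cont_end x (alpha k)); auto; try lra. apply G_cont; auto. }
      rewrite fixa in E1, E2.
      assert (Hl1 : (l - 1) * (alpha (k + 1) - alpha k) = 0) by nra.
      apply Rmult_integral in Hl1. destruct Hl1 as [Hl1|Hl1]; [|lra].
      unfold Sk in St. rewrite Hcx by lra. nra. }
    set (Ks' := nodup Z.eq_dec Ks).
    assert (Hx : x = prodL x Ks').
    { apply functional_extensionality; intros t.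
      destruct (classic (exists k, In k Ks' /\ Sk k t)) as [[k [Hk St]]|Nex].
      - symmetry. exact (prod_in x Ks' k t (pres x Gx Hc) (NoDup_nodup _ _) Hk St).
      - rewrite prod_out. 2:{ intros k Hk St. apply Nex; eauto. }
        destruct (classic (inI r t)) as [It|Nt]; [|apply G_out; auto].
        destruct (Req_dec t 0) as [E|NE]. subst t; apply G_fix0; auto.
        unfold inI in It. destruct (covering t) as [k Hk]. lra.
        destruct (Req_dec t (alpha k)) as [E|NE2]. subst t; auto.
        assert (St : Sk k t) by (unfold Sk; lra).
        apply (idout k); auto. intros Hk'. apply Nex. exists k. split; auto.
        apply nodup_In; auto. }
    rewrite Hx. apply Gen_prod. intros k _. auto.
  -
    intros Hg. induction Hg as [f Hf| |f g Hg IH E|f g Hf IHf Hg IHg|f g Hf IHf E1 E2].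
    + destruct Hf as [k Hk]. replace f with (conjZ a k d)
        by (apply functional_extensionality; intros t; symmetry; auto).
      split. apply G_conj; auto. intros j. destruct (Z.eq_dec j k) as [E|NE].
      * subst j. apply commute_conj; auto.
      * apply (commute_disjoint _ _ (Sk k) (Sk j)).
        apply G_inj, G_conj; auto. apply G_inj; auto.
        apply dsupp. intros s' Hs'; apply bsupp; auto.
        intros s' H1 H2. apply (S_disj k j s'); auto.
    + split. apply G_id. intros k t. auto.
    + replace f with g by (apply functional_extensionality; intros t; symmetry; auto). auto.
    + destruct IHf as [Gf Cf]. destruct IHg as [Gg Cg]. split. apply G_comp; auto.
      intros k t. rewrite Cf, Cg. auto.
    + destruct IHf as [Gf Cf]. split. apply (G_inv f); auto.
      intros k t. apply (G_inj f Gf). rewrite E2, Cf, E2. auto.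
Qed.

End Alpha.
End Main.

Theorem lemma4p6 (r : R) (Lambda A : R -> Prop)
  (hr : 0 < r) (hLambda : mult_subgroup_pos Lambda) (hA : add_subgroup A)
  (hrA : A r) (hLA : forall l t, Lambda l -> A t -> A (l * t))
  (a b d : R -> R) (alpha0 : R)
  (ha : inFup r Lambda A a) (hsa : forall t, supp r a t <-> 0 < t < r)
  (halpha0 : 0 < alpha0 < r) (halpha0A : A alpha0)
  (hb : inFup r Lambda A b)
  (hsb : forall t, supp r b t <-> alpha0 < t < powZ a 1 alpha0)
  (hd : inF_S r Lambda A (fun t => alpha0 < t < powZ a 1 alpha0) d)
  (hcent : forall x,
     (inF_S r Lambda A (fun t => alpha0 < t < powZ a 1 alpha0) x /\ commute x b)
     <-> Gen (fun y => fext y d) x) :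
  forall x,
    (inF r Lambda A x /\ forall k : Z, commute x (conjZ a k b))
    <-> Gen (fun y => exists k : Z, fext y (conjZ a k d)) x.
Proof.
  destruct ha as [Ga Hup]. destruct hb as [Gb _].
  assert (Gd : G r Lambda A d) by apply hd.
  apply (main_lemma r Lambda A hr hLambda hA hLA a alpha0 Ga halpha0); auto.
  - intros t Ht. destruct (proj2 (hsa t) Ht) as [It Ne]. pose proof (Hup t It). lra.
  - intros t. split.
    + intros Ne. destruct (classic (inI r t)) as [It|Nt].
      * apply hsb. split; auto.
      * exfalso. apply Ne. apply (G_out r Lambda A b); auto.
    + intros H. apply hsb in H. apply H.
  - intros t Ne. destruct (classic (inI r t)) as [It|Nt].
    + apply (proj2 hd). split; auto.
    + exfalso. apply Ne. apply (G_out r Lambda A d); auto.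
  - intros x. rewrite <- hcent. split.
    + intros [Gx [Hs Hc]]. split; auto. split; auto. intros t [It Ne]. apply Hs; auto.
    + intros [[Gx Hs] Hc]. split; auto. split; auto. intros t Ne.
      destruct (classic (inI r t)) as [It|Nt].
      * apply Hs. split; auto.
      * exfalso. apply Ne. apply (G_out r Lambda A x); auto.
Qed.
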